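(* Let $G$ be a locally compact group with a continuous action $\alpha$ by isometries on a Banach space $A$. For a fixed non-zero $a\in A$ and a subset $U\subseteq G$ let $F_U(a)=\operatorname{span}\{\alpha_x(a)\mid x\in U\}$. (i) If $F_U(a)$ is finite dimensional for some neighborhood $U$ of $e$, then $G$ has an open subgroup $H$ such that $F_H(a)$ is finite dimensional. (ii) The same conclusion holds if $F_C(a)$ is finite dimensional for some measurable set $C$ of positive Haar measure. (iii) If in addition the functions $x\mapsto\langle\alpha_x(b),\phi\rangle$ belong to $C_0(G)$ for all $b\in A$, $\phi\in A^*$, then the open subgroup $H$ in (i) or (ii) is moreover compact. *)

(* Defs.v *)
From HB Require Import structures.
From mathcomp Require Import all_boot all_order all_algebra.
From mathcomp Require Import all_classical all_reals all_analysis.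
Set Implicit Arguments. Unset Strict Implicit. Unset Printing Implicit Defensive.
Import Order.TTheory GRing.Theory Num.Theory.
Import numFieldNormedType.Exports.
Local Open Scope classical_set_scope.
Local Open Scope ring_scope.

Definition lc_group (G : ptopologicalType) (mul : G -> G -> G) (inv : G -> G)
    (e : G) : Prop :=
  [/\ (forall x y z, mul x (mul y z) = mul (mul x y) z),
      (forall x, mul e x = x /\ mul x e = x),
      (forall x, mul (inv x) x = e /\ mul x (inv x) = e),
      (continuous (fun p : G * G => mul p.1 p.2) /\ continuous inv) &
      (hausdorff_space G /\ locally_compact [set: G])].

(** [alpha] is a continuous action of the group by linear isometries on the
    normed space [A] (continuity = strong continuity: x |-> alpha_x(v) is
    continuous for every v). *)
Definition isometric_action (R : realType) (G : ptopologicalType)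
    (mul : G -> G -> G) (e : G) (A : normedModType R) (alpha : G -> A -> A) :
    Prop :=
  [/\ (forall x (c : R) (u v : A), alpha x (c *: u + v) = c *: alpha x u + alpha x v),
      (forall x (v : A), `|alpha x v| = `|v|),
      (forall v, alpha e v = v),
      (forall x y v, alpha (mul x y) v = alpha x (alpha y v)) &
      (forall v, continuous (fun x => alpha x v))].

Definition orbit_set (G : Type) (R : realType) (A : normedModType R)
    (alpha : G -> A -> A) (a : A) (U : set G) : set A :=
  [set alpha x a | x in U].

Definition fin_dim_span (R : realType) (A : normedModType R) (S : set A) : Prop :=
  exists s : seq A, forall v, S v ->
    exists c : nat -> R, v = \sum_(i < size s) c i *: nth 0 s i.

Definition subgroup (G : Type) (mul : G -> G -> G) (inv : G -> G) (e : G)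
    (H : set G) : Prop :=
  [/\ H e, (forall x y, H x -> H y -> H (mul x y)) & (forall x, H x -> H (inv x))].

Notation borelType G := (g_sigma_algebraType (@open G)).

Definition haar_measure (R : realType) (G : ptopologicalType) (mul : G -> G -> G)
    (mu : {measure set (borelType G) -> \bar R}) : Prop :=
  [/\ (forall x (E : set (borelType G)), measurable E ->
          mu [set mul x y | y in E] = mu E),
      (forall K : set G, compact K -> (mu K < +oo)%E),
      (forall U : set G, open U -> U !=set0 -> (0 < mu U)%E) &
      (forall E : set (borelType G), measurable E ->
          mu E = ereal_sup [set mu K | K in [set K : set G | compact K /\ K `<=` E]])].

(** f vanishes at infinity (f in C_0(G), continuity being given separately). *)
Definition vanishes_at_infty (R : realType) (G : ptopologicalType) (f : G -> R) : Prop :=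
  forall eps : R, 0 < eps -> exists K : set G, compact K /\
    forall x, ~ K x -> `|f x| < eps.

Definition dual_elt (R : realType) (A : normedModType R) (phi : A -> R) : Prop :=
  (forall (c : R) u v, phi (c *: u + v) = c * phi u + phi v) /\ continuous phi.

(* Main.v *)
Require Import Defs.
From HB Require Import structures.
From mathcomp Require Import all_boot all_order all_algebra.
From mathcomp Require Import all_classical all_reals all_analysis.
From mathcomp Require Import ring lra.
Set Implicit Arguments. Unset Strict Implicit. Unset Printing Implicit Defensive.
Import Order.TTheory GRing.Theory Num.Theory.
Import numFieldNormedType.Exports.
Local Open Scope classical_set_scope.
Local Open Scope ring_scope.


Section Lin.
Variables (R : realType) (A : lmodType R).

Definition lc (s : seq A) (c : nat -> R) : A := \sum_(i < size s) c i *: nth 0 s i.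
Definition inspan (s : seq A) (v : A) := exists c, v = lc s c.
Definition indep (s : seq A) := forall c, lc s c = 0 -> forall i, (i < size s)%N -> c i = 0.

Lemma inspan0 s : inspan s 0.
Proof. by exists (fun _ => 0); rewrite /lc big1 // => i _; rewrite scale0r. Qed.

Lemma inspanD s u v : inspan s u -> inspan s v -> inspan s (u + v).
Proof.
move=> [c ->] [d ->]; exists (fun i => c i + d i).
by rewrite /lc -big_split /=; apply: eq_bigr => i _; rewrite scalerDl.
Qed.

Lemma inspanZ s k u : inspan s u -> inspan s (k *: u).
Proof.
move=> [c ->]; exists (fun i => k * c i).
by rewrite /lc scaler_sumr; apply: eq_bigr => i _; rewrite scalerA.
Qed.

Lemma inspan_sum s n (F : 'I_n -> A) : (forall i, inspan s (F i)) ->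
  inspan s (\sum_(i < n) F i).
Proof.
move=> HF; apply: (big_ind (inspan s)); [exact: inspan0|exact: inspanD|].
by move=> i _; exact: HF.
Qed.

Lemma inspan_nth s i : (i < size s)%N -> inspan s (nth 0 s i).
Proof.
move=> Hi; exists (fun j => (j == i)%:R); rewrite /lc.
rewrite (bigD1 (Ordinal Hi)) //= eqxx scale1r big1 ?addr0 // => j Hj.
have -> : (nat_of_ord j == i) = false.
  by apply/negbTE; apply: contra Hj => /eqP Hji; apply/eqP/val_inj.
by rewrite scale0r.
Qed.

Lemma inspan_trans s t v : (forall i, (i < size t)%N -> inspan s (nth 0 t i)) ->
  inspan t v -> inspan s v.
Proof.
move=> Ht [c ->]; apply: inspan_sum => i; apply: inspanZ; exact: Ht.
Qed.

Lemma lc_cons v t c : lc (v :: t) c = c 0%N *: v + lc t (fun i => c i.+1).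
Proof. by rewrite /lc big_ord_recl /=. Qed.

Lemma indep_nil : indep [::].
Proof. by move=> c _ i. Qed.

Lemma indep_cons t v : indep t -> ~ inspan t v -> indep (v :: t).
Proof.
move=> It Nv c H.
have c0 : c 0%N = 0.
  apply/eqP; apply/negP => /negP nz; apply: Nv.
  exists (fun i => - (c i.+1 / c 0%N)).
  move: H; rewrite lc_cons => /eqP; rewrite addr_eq0 => /eqP H.
  have -> : v = (c 0%N)^-1 *: (c 0%N *: v) by rewrite scalerA mulVf // scale1r.
  rewrite H /lc scalerN scaler_sumr -sumrN; apply: eq_bigr => i _.
  by rewrite scalerA scaleNr mulrC.
move: H; rewrite lc_cons c0 scale0r add0r => H.
move=> [|i] Hi //; exact: It H i Hi.
Qed.

Lemma indep_size s t : (forall i, (i < size t)%N -> inspan s (nth 0 t i)) ->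
  indep t -> (size t <= size s)%N.
Proof.
move=> Ht It; rewrite leqNgt; apply/negP => Hlt.
have /choice[d Hd] : forall i, exists c, (i < size t)%N -> nth 0 t i = lc s c.
  move=> i; have [Hi|Hi] := boolP (i < size t)%N.
    by have [c Hc] := Ht i Hi; exists c.
  by exists (fun _ => 0) => /negP.
pose M : 'M[R]_(size t, size s) := \matrix_(i, j) d i j.
have : kermx M != 0.
  rewrite -mxrank_eq0 mxrank_ker subn_eq0 -ltnNge.
  exact: leq_ltn_trans (rank_leq_col M) Hlt.
move/rowV0Pn => [w /sub_kermxP wM wnz].
pose c i := oapp (fun j : 'I_(size t) => w 0 j) 0 (insub i).
have Hc : lc t c = 0.
  transitivity (\sum_(i < size t) w 0 i *: \sum_(j < size s) d i j *: nth 0 s j).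
    rewrite /lc; apply: eq_bigr => i _; rewrite /c valK /= Hd //.
  under eq_bigr do rewrite scaler_sumr.
  rewrite exchange_big /= big1 // => j _.
  transitivity ((w *m M) 0 j *: nth 0 s j); last by rewrite wM mxE scale0r.
  rewrite mxE scaler_suml; apply: eq_bigr => i _; by rewrite scalerA mxE.
move/negP: wnz; apply; apply/eqP/rowP => i; rewrite !mxE.
have := It c Hc i (ltn_ord i); rewrite /c valK /=.
move=> H0; rewrite -[in RHS]H0; congr (w _ _); exact: ord1.
Qed.

Lemma max_extract s (S : set A) : (forall v, S v -> inspan s v) ->
  exists t, [/\ (forall i, (i < size t)%N -> S (nth 0 t i)), indep t &
              forall v, S v -> inspan t v].
Proof.
move=> HS.
pose P k := `[< exists t, [/\ size t = k, (forall i, (i < size t)%N -> S (nth 0 t i)) & indep t] >].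
have exP : exists k, P k.
  by exists 0%N; apply/asboolP; exists [::]; split => //; exact: indep_nil.
have bnd : forall k, P k -> (k <= size s)%N.
  move=> k /asboolP [t [<- tS It]]; apply: indep_size It => i Hi; exact/HS/tS.
case: (ex_maxnP exP bnd) => k /asboolP [t [tk tS It]] maxk.
exists t; split => // v Sv.
have [//|Nv] := pselect (inspan t v).
have : P k.+1.
  apply/asboolP; exists (v :: t); split => /=; first by rewrite tk.
    by move=> [|i] Hi //=; exact: tS.
  exact: indep_cons.
by move/maxk; rewrite ltnn.
Qed.

End Lin.


Section NormEq.
Variables (R : realType) (A : normedModType R).

Lemma cont_sum (T : topologicalType) n (g : 'I_n -> T -> A) x :
  (forall i, {for x, continuous (g i)}) ->
  {for x, continuous (fun y => \sum_(i < n) g i y)}.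
Proof.
elim: n g => [|n IH] g Hg.
  have -> : (fun y => \sum_(i < 0) g i y) = fun _ => 0.
    by apply/funext => y; rewrite big_ord0.
  exact: cvg_cst.
have -> : (fun y => \sum_(i < n.+1) g i y) =
    (fun y => g ord0 y) + (fun y => \sum_(i < n) g (lift ord0 i) y).
  by apply/funext => y; rewrite big_ord_recl.
apply: continuousD; first exact: Hg.
by apply: IH => i; exact: Hg.
Qed.

Lemma indep_bound (t : seq A) : indep t ->
  exists2 d : R, 0 < d & forall c i, (i < size t)%N -> d * `|c i| <= `|lc t c|.
Proof.
move=> It.
pose n := size t.
pose F (v : 'rV[R]_n) := `|\sum_(i < n) v 0 i *: nth 0 t i|.
have Fc : continuous F.
  move=> v; apply: (@continuous_comp _ _ _ (fun v : 'rV[R]_n => \sum_(i < n) v 0 i *: nth 0 t i) (@Num.norm _ A)).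
    apply: cont_sum => i; apply: continuousZr_tmp; exact: coord_continuous.
  exact: norm_continuous.
pose S (j : 'I_n) := [set v : 'rV[R]_n | forall i,
  (fun i => if i == j then [set (1 : R)] else [set x : R | -1 <= x <= 1]) i (v 0 i)].
have dj : forall j : 'I_n, exists d, 0 < d /\ forall v, S j v -> d <= F v.
  move=> j.
  have cS : compact (S j).
    apply: rV_compact => i; case: (i == j); [exact: compact_set1|]; have := @segment_compact R (-1) 1; congr compact; apply/funext => x /=; rewrite in_itv /=; exact/propext.
  have nS : S j !=set0.
    exists (\row_i (if i == j then 1 else 0)) => i; rewrite mxE.
    by case: (i == j) => //=; rewrite ler01 lerN10.
  have [c Sc Hc] := compact_EVT_min nS cS (continuous_subspaceT Fc).
  exists (F c); split => [|v Sv]; last by apply: Hc; rewrite inE.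
  rewrite lt_neqAle normr_ge0 andbT eq_sym normr_eq0; apply/negP => /eqP H0.
  pose cf k := oapp (fun j : 'I_n => c 0 j) 0 (insub k).
  have Hcf : lc t cf = 0.
    by rewrite -H0 /lc; apply: eq_bigr => i _; rewrite /cf valK.
  have := It cf Hcf j (ltn_ord j); rewrite /cf valK /=.
  by move: Sc; rewrite inE => /(_ j); rewrite eqxx /= => ->; apply/eqP; exact: oner_neq0.
have /choice [dl Hdl] := dj.
have dpos : 0 < \big[Num.min/1]_(j < n) dl j.
  by elim/big_ind: _ => //[x y Hx Hy|j _]; [rewrite lt_min Hx Hy|exact: (Hdl j).1].
exists (\big[Num.min/1]_(j < n) dl j) => //.
move=> c i Hi.
case: (@arg_maxP _ _ 'I_n (Ordinal Hi) predT (fun k : 'I_n => `|c k|) isT) => j _ Hj.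
have Hij : `|c i| <= `|c j| by exact: (Hj (Ordinal Hi)).
have [cj0|cjn0] := eqVneq (c j) 0.
  have : `|c i| <= 0 by move: Hij; rewrite cj0 normr0.
  by rewrite normr_le0 => /eqP ->; rewrite normr0 mulr0.
pose v := \row_(k < n) (c k / c j).
have Sv : S j v.
  move=> k; rewrite mxE; case: eqP => [->|_] /=; first by rewrite divff.
  rewrite -ler_norml normrM normfV ler_pdivrMr ?normr_gt0 // mul1r; exact: Hj.
have Hlc : lc t c = c j *: \sum_(i < n) v 0 i *: nth 0 t i.
  rewrite /lc scaler_sumr; apply: eq_bigr => k _; rewrite mxE scalerA.
  by rewrite mulrC divfK.
have HF := (Hdl j).2 v Sv.
have Hd : \big[Num.min/1]_(j0 < n) dl j0 <= dl j by exact: bigmin_le.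
rewrite Hlc normrZ; apply: le_trans (_ : `|c j| * dl j <= _).
  by rewrite mulrC; apply: ler_pM => //; exact: ltW.
by apply: ler_wpM2l => //; exact: normr_ge0.
Qed.

End NormEq.


Section HBS.
Variables (R : realType) (A : normedModType R) (K : R).
Hypothesis HK : 0 <= K.
Variable B0 : set (A * R).

Definition glin (Γ : set (A * R)) := forall x r y s k, Γ (x, r) -> Γ (y, s) ->
  Γ (k *: x + y, k * r + s).
Definition gfun (Γ : set (A * R)) := forall x r s, Γ (x, r) -> Γ (x, s) -> r = s.
Definition gbnd (Γ : set (A * R)) := forall x r, Γ (x, r) -> r <= K * `|x|.
Definition good (Γ : set (A * R)) := [/\ glin Γ, gfun Γ, B0 `<=` Γ & gbnd Γ].

Lemma glin0 Γ x r : glin Γ -> Γ (x, r) -> Γ (0, 0).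
Proof.
by move=> HL Hx; have := HL x r x r (-1) Hx Hx; rewrite scaleN1r addNr mulN1r addNr.
Qed.

Lemma glinZ Γ x r k : glin Γ -> Γ (x, r) -> Γ (k *: x, k * r).
Proof.
move=> HL Hx; have := HL x r 0 0 k Hx (glin0 HL Hx); by rewrite !addr0.
Qed.

Lemma glinD Γ x r y s : glin Γ -> Γ (x, r) -> Γ (y, s) -> Γ (x + y, r + s).
Proof. by move=> HL Hx Hy; have := HL x r y s 1 Hx Hy; rewrite scale1r mul1r. Qed.

Let P (Γ : set (A * R)) := Γ = set0 \/ good Γ.

Let Pgood Γ p : P Γ -> Γ p -> good Γ.
Proof. by case => // E; rewrite E. Qed.

Let chainP (F : set (set (A * R))) : F `<=` P -> total_on F subset ->
  P (\bigcup_(X in F) X).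
Proof.
move=> FP Ftot.
have [[G0 [FG0 gG0]]|Hno] := pselect (exists G, F G /\ good G); last first.
  left; apply/seteqP; split => // p [G FG Gp]; apply: Hno; exists G; split => //.
  exact: Pgood (FP _ FG) Gp.
have big2 G1 G2 p q : F G1 -> F G2 -> G1 p -> G2 q ->
    exists G, [/\ F G, good G, G p & G q].
  move=> F1 F2 H1 H2; have [S12|S21] := Ftot _ _ F1 F2.
    by exists G2; split => //; [exact: Pgood (FP _ F2) H2|exact: S12].
  by exists G1; split => //; [exact: Pgood (FP _ F1) H1|exact: S21].
right; split.
- move=> x r y s k [G1 F1 H1] [G2 F2 H2].
  have [G [FG [HL _ _ _] Gp Gq]] := big2 _ _ _ _ F1 F2 H1 H2.
  by exists G => //; exact: HL.
- move=> x r s [G1 F1 H1] [G2 F2 H2].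
  have [G [FG [_ HF _ _] Gp Gq]] := big2 _ _ _ _ F1 F2 H1 H2.
  exact: HF Gp Gq.
- by move=> p B0p; exists G0 => //; case: gG0 => _ _ + _; apply.
- move=> x r [G1 F1 H1]; have [_ _ _ Hb] := Pgood (FP _ F1) H1; exact: Hb.
Qed.

Hypothesis B0n : B0 !=set0.

Lemma normZinv (m : R) (y x0 : A) : 0 < m ->
  m * `|m^-1 *: y + x0| = `|y + m *: x0|.
Proof.
move=> m0; rewrite -{1}(gtr0_norm m0) -normrZ scalerDr scalerA divff ?gt_eqF //.
by rewrite scale1r.
Qed.

Let extension Γ x0 : good Γ -> (forall r, ~ Γ (x0, r)) ->
  exists Γ', good Γ' /\ Γ `<` Γ'.
Proof.
move=> [HL HF HB Hb] Hx0.
have G00 : Γ (0, 0).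
  by have [[x r] B0p] := B0n; exact: glin0 HL (HB _ B0p).
pose L := [set z : R | exists y r, Γ (y, r) /\ z = r - K * `|y - x0|].
have ub y r z s : Γ (y, r) -> Γ (z, s) -> r - K * `|y - x0| <= K * `|z + x0| - s.
  move=> Hy Hz; have := Hb _ _ (glinD HL Hy Hz).
  have : `|y + z| <= `|y - x0| + `|z + x0|.
    by apply: le_trans (ler_normD _ _); rewrite addrACA addNr addr0.
  move=> /(ler_wpM2l HK); rewrite mulrDr; lra.
pose c := sup L.
have hasL : L !=set0 by exists (0 - K * `|0 - x0|), 0, 0.
have ubL : has_ubound L.
  by exists (K * `|0 + x0| - 0) => _ [y [r [Hy ->]]]; exact: ub.
have cL y r : Γ (y, r) -> r - K * `|y - x0| <= c.
  by move=> Hy; apply: ub_le_sup => //; exists y, r.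
have cU z s : Γ (z, s) -> c <= K * `|z + x0| - s.
  by move=> Hz; apply: ge_sup => // _ [y [r [Hy ->]]]; exact: ub.
pose Γ' := [set p : A * R | exists y r k, [/\ Γ (y, r), p.1 = y + k *: x0 & p.2 = r + k * c]].
exists Γ'; split; last first.
  split.
    move=> [x r] Hp; exists x, r, 0; split => //=; by rewrite ?scale0r ?mul0r addr0.
  move=> /(_ (x0, c)) H; apply: (Hx0 c); apply: H.
  by exists 0, 0, 1; split => //=; rewrite ?scale1r ?mul1r add0r.
split.
- move=> _ _ _ _ k2 [y [r [k [Hy /= -> ->]]]] [y' [r' [k' [Hy' /= -> ->]]]].
  exists (k2 *: y + y'), (k2 * r + r'), (k2 * k + k'); split => /=.
  + exact: HL.
  + by rewrite scalerDr scalerA addrACA scalerDl.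
  + by ring.
- move=> x r1 r2 [y [r [k [Hy /= E1 ->]]]] [y' [r' [k' [Hy' /= E2 ->]]]].
  have [kk|kk] := eqVneq k k'.
    subst k'; have yy : y = y' by apply: (addIr (k *: x0)); rewrite -E1 -E2.
    by subst y'; rewrite (HF _ _ _ Hy Hy').
  exfalso; apply: (Hx0 ((k' - k)^-1 * (r - r'))).
  have -> : x0 = (k' - k)^-1 *: (y - y').
    apply: (scalerI (a := k' - k)); first by rewrite subr_eq0 eq_sym.
    rewrite scalerA divff ?scale1r; last by rewrite subr_eq0 eq_sym.
    have E : y + k *: x0 = y' + k' *: x0 by rewrite -E1 -E2.
    by rewrite scalerBl -(addKr y' (k' *: x0)) -E addrA [- y' + y]addrC addrK.
  apply: glinZ => //.
  have := HL y' r' y r (-1) Hy' Hy; rewrite scaleN1r mulN1r.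
  by rewrite [- y' + y]addrC [- r' + r]addrC.
- move=> p B0p; have Hp := HB _ B0p; exists p.1, p.2, 0; split => //=.
    by case: p {B0p} Hp.
  by rewrite scale0r addr0.
  by rewrite mul0r addr0.
- move=> x r [y [r' [k [Hy /= -> ->]]]].
  have [k0|k0|->] := ltgtP k 0; last by rewrite scale0r mul0r !addr0; exact: Hb.
  + have m0 : 0 < - k by rewrite oppr_gt0.
    have h := cL _ _ (glinZ ((- k)^-1) HL Hy).
    have hN : - k * `|(- k)^-1 *: y - x0| = `|y + k *: x0|.
      by rewrite normZinv // scalerN scaleNr opprK.
    have hinv : (- k) * (- k)^-1 = 1 by rewrite divff // gt_eqF.
    move: h hN hinv m0; set a := `|_ - x0|; set N := `|_ + _|; set ki := (- k)^-1.
    move=> h hN hinv m0.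
    have h2 := ler_wpM2l (ltW m0) h.
    have e1 : - k * (ki * r' - K * a) = r' - K * N.
      by rewrite mulrBr mulrA hinv mul1r mulrCA hN.
    rewrite e1 in h2; lra.
  + have h := cU _ _ (glinZ (k^-1) HL Hy).
    have hN : k * `|k^-1 *: y + x0| = `|y + k *: x0| by rewrite normZinv.
    have hinv : k * k^-1 = 1 by rewrite divff // gt_eqF.
    move: h hN hinv; set a := `|_ + x0|; set N := `|_ + _|; set ki := k^-1.
    move=> h hN hinv.
    have h2 := ler_wpM2l (ltW k0) h.
    have e1 : k * (K * a - ki * r') = K * N - r'.
      by rewrite mulrBr mulrCA hN mulrA hinv mul1r.
    rewrite e1 in h2; lra.
Qed.


Lemma hahn_banach : good B0 -> exists phi : A -> R,
  [/\ forall k u v, phi (k *: u + v) = k * phi u + phi v,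
      forall x r, B0 (x, r) -> phi x = r &
      forall x, `|phi x| <= K * `|x|].
Proof.
move=> gB0.
have [Γ [PΓ maxΓ]] := Zorn_bigcup chainP.
have gΓ : good Γ.
  case: PΓ => // E; exfalso; apply: (maxΓ B0); last by right.
  rewrite E; split => // H; have [p Hp] := B0n; exact: H _ Hp.
have [HL HF HB Hb] := gΓ.
have tot x : exists r, Γ (x, r).
  apply: contra_notP (fun H => H) => Hn.
  have [Γ' [gΓ' ΓΓ']] := extension gΓ (fun r H => Hn (ex_intro _ r H)).
  by apply: (maxΓ Γ' ΓΓ'); right.
have /choice [phi Hphi] := tot.
exists phi; split.
- by move=> k u v; apply: HF (Hphi _) _; apply: HL; exact: Hphi.
- by move=> x r B0x; apply: HF (Hphi _) (HB _ B0x).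
- move=> x; rewrite ler_norml Hb ?andbT //.
  have := Hb _ _ (glinZ (-1) HL (Hphi x)); rewrite scaleN1r normrN mulN1r.
  by rewrite lerNl.
Qed.

End HBS.

Lemma bounded_linear_cont (R : realType) (A : normedModType R) (phi : A -> R) (K : R) :
  (forall k u v, phi (k *: u + v) = k * phi u + phi v) ->
  (forall x, `|phi x| <= K * `|x|) -> continuous phi.
Proof.
move=> Hl Hb x.
have phiB y : phi y - phi x = phi (y - x).
  have := Hl (-1) x y; rewrite scaleN1r mulN1r => H.
  by rewrite [phi y - phi x]addrC -H [- x + y]addrC.
apply/cvgrPdist_lt => eps eps0.
have K1 : 0 < `|K| + 1 by rewrite ltr_wpDl.
near=> y.
rewrite distrC phiB; apply: (le_lt_trans (Hb _)).
apply: (le_lt_trans (_ : K * `|y - x| <= `|K| * `|y - x|)).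
  by apply: ler_wpM2r => //; exact: ler_norm.
have : `|y - x| < eps / (`|K| + 1).
  rewrite distrC; near: y; apply: (@cvgr_dist_lt _ _ _ (nbhs x) _ id x); first exact: cvg_id.
  by rewrite divr_gt0.
rewrite ltr_pdivlMr // => h.
apply: le_lt_trans h; rewrite mulrDr mulr1 mulrC lerDl; exact: normr_ge0.
Unshelve. all: by end_near.
Qed.


Section Grp.
Variables (R : realType) (G : ptopologicalType) (mul : G -> G -> G)
  (inv : G -> G) (e : G) (A : normedModType R) (alpha : G -> A -> A).
Hypothesis HG : lc_group mul inv e.
Hypothesis HA : isometric_action mul e alpha.

Lemma mulA x y z : mul x (mul y z) = mul (mul x y) z.
Proof. by case: HG. Qed.
Lemma mul1g x : mul e x = x. Proof. by case: HG => _ /(_ x) []. Qed.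
Lemma mulg1 x : mul x e = x. Proof. by case: HG => _ /(_ x) []. Qed.
Lemma mulVg x : mul (inv x) x = e. Proof. by case: HG => _ _ /(_ x) []. Qed.
Lemma mulgV x : mul x (inv x) = e. Proof. by case: HG => _ _ /(_ x) []. Qed.

Lemma mulKg x y : mul (inv x) (mul x y) = y.
Proof. by rewrite mulA mulVg mul1g. Qed.
Lemma mulKVg x y : mul x (mul (inv x) y) = y.
Proof. by rewrite mulA mulgV mul1g. Qed.

Lemma inv1 : inv e = e. Proof. by rewrite -[LHS]mulg1 mulVg. Qed.
Lemma invK x : inv (inv x) = x.
Proof. by rewrite -[LHS]mulg1 -(mulVg x) mulA mulVg mul1g. Qed.
Lemma inv_uniq x y : mul x y = e -> inv x = y.
Proof. by move=> H; rewrite -[LHS]mulg1 -H mulKg. Qed.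
Lemma invM x y : inv (mul x y) = mul (inv y) (inv x).
Proof.
apply: inv_uniq; by rewrite -mulA (mulA y) mulgV mul1g mulgV.
Qed.

Lemma mul_cont : continuous (fun p : G * G => mul p.1 p.2).
Proof. by case: HG => _ _ _ []. Qed.
Lemma inv_cont : continuous inv.
Proof. by case: HG => _ _ _ []. Qed.

Lemma mul_contl c : continuous (mul c).
Proof.
move=> y; apply: (@continuous_comp _ _ _ (fun y => (c, y)) (fun p : G * G => mul p.1 p.2) y); last exact: mul_cont.
exact: (cvg_pair (cvg_cst c) cvg_id).
Qed.

Lemma mul_contr c : continuous (mul^~ c).
Proof.
move=> y; apply: (@continuous_comp _ _ _ (fun y => (y, c)) (fun p : G * G => mul p.1 p.2) y); last exact: mul_cont.
exact: (cvg_pair cvg_id (cvg_cst c)).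
Qed.


Lemma alphaM x y v : alpha (mul x y) v = alpha x (alpha y v).
Proof. by case: HA. Qed.
Lemma alpha1 v : alpha e v = v.
Proof. by case: HA. Qed.
Lemma alpha_lin x (c : R) u v : alpha x (c *: u + v) = c *: alpha x u + alpha x v.
Proof. by case: HA. Qed.
Lemma alpha_norm x v : `|alpha x v| = `|v|.
Proof. by case: HA. Qed.
Lemma alpha_cont v : continuous (fun x => alpha x v).
Proof. by case: HA. Qed.
Lemma alpha0 x : alpha x 0 = 0.
Proof.
have h := alpha_lin x 1 0 0; rewrite scaler0 addr0 scale1r in h.
by apply: (addrI (alpha x 0)); rewrite addr0 -h.
Qed.
Lemma alphaD x u v : alpha x (u + v) = alpha x u + alpha x v.
Proof. by have := alpha_lin x 1 u v; rewrite !scale1r. Qed.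
Lemma alphaZ x c u : alpha x (c *: u) = c *: alpha x u.
Proof. by have := alpha_lin x c u 0; rewrite !addr0 alpha0 addr0. Qed.
Lemma alpha_sum x n (F : 'I_n -> A) : alpha x (\sum_(i < n) F i) = \sum_(i < n) alpha x (F i).
Proof. exact: (big_morph (alpha x) (alphaD x) (alpha0 x)). Qed.

Lemma inspan_alpha g t w v : (forall i, (i < size t)%N -> inspan w (alpha g (nth 0 t i))) ->
  inspan t v -> inspan w (alpha g v).
Proof.
move=> Ht [c ->]; rewrite /lc alpha_sum; apply: inspan_sum => i.
rewrite alphaZ; apply: inspanZ; exact: Ht.
Qed.

Lemma nbhs_inv (N : set G) : nbhs e N -> nbhs e (inv @^-1` N).
Proof. by move=> HN; apply: inv_cont; rewrite inv1. Qed.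

Lemma stab_subgroup (w : seq A) (N : set G) : nbhs e N ->
  (forall g, N g -> forall v, inspan w v -> inspan w (alpha g v)) ->
  exists H, [/\ subgroup mul inv e H, open H &
    forall h, H h -> forall v, inspan w v -> inspan w (alpha h v)].
Proof.
move=> HN HNw.
pose P g := forall v, inspan w v -> inspan w (alpha g v).
have PM x y : P x -> P y -> P (mul x y).
  by move=> Px Py v Hv; rewrite alphaM; apply: Px; apply: Py.
have N'e : nbhs e (N `&` inv @^-1` N) by apply: filterI => //; exact: nbhs_inv.
exists (fun g => P g /\ P (inv g)); split.
- split.
  + by rewrite inv1; split => v Hv; rewrite alpha1.
  + move=> x y [Px Pix] [Py Piy]; split; first exact: PM.
    by rewrite invM; exact: PM.
  + by move=> x [Px Pix]; split => //; rewrite invK.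
- rewrite openE => x [Px Pix].
  have Hn : nbhs x (mul (inv x) @^-1` (N `&` inv @^-1` N)).
    by apply: mul_contl; rewrite mulVg.
  apply: filterS Hn => y [/= Ny Niy].
  rewrite -(mulKVg x y); split; first by apply: PM => //; exact: HNw.
  by rewrite invM; apply: PM => //; exact: HNw.
- by move=> h [].
Qed.

Lemma part1 (a : A) (U : set G) : nbhs e U -> fin_dim_span (orbit_set alpha a U) ->
  exists H, [/\ subgroup mul inv e H, open H & fin_dim_span (orbit_set alpha a H)].
Proof.
rewrite nbhsE => -[U0 [oU0 U0e] sU0] [s Hs].
have sub : orbit_set alpha a U0 `<=` orbit_set alpha a U.
  by move=> v [x Ux <-]; exists x => //; exact: sU0.
have [t [tS It St]] := @max_extract R A s (orbit_set alpha a U0)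
  (fun v Sv => Hs v (sub v Sv)).
have /choice [x Hx] : forall i, exists y, (i < size t)%N -> U0 y /\ alpha y a = nth 0 t i.
  move=> i; have [Hi|Hi] := boolP (i < size t)%N; last by exists e => /negP.
  by have [y Uy <-] := tS i Hi; exists y.
have HN : nbhs e (fun g => forall i : 'I_(size t), U0 (mul g (x i))).
  apply: filter_forall => i; apply: (@mul_contr (x i) e U0); rewrite mul1g.
  by have := oU0; rewrite openE; apply; exact: (Hx i (ltn_ord i)).1.
have HNt : forall g, (fun g => forall i : 'I_(size t), U0 (mul g (x i))) g ->
    forall v, inspan t v -> inspan t (alpha g v).
  move=> g Ng v Hv; apply: inspan_alpha Hv => i Hi.
  have [_ <-] := Hx i Hi; rewrite -alphaM; apply: St.
  by exists (mul g (x i)) => //; exact: (Ng (Ordinal Hi)).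
have [H [sH oH HH]] := stab_subgroup HN HNt.
exists H; split => //; exists t => v [h Hh <-].
have Ha : inspan t a by apply: St; exists e => //; exact: alpha1.
by have [c ->] := HH h Hh a Ha; exists c.
Qed.

End Grp.


Section Tube.
Variables (G : ptopologicalType) (mul : G -> G -> G) (inv : G -> G) (e : G).
Hypothesis HG : lc_group mul inv e.

Lemma tube (K O : set G) : compact K -> open O -> K `<=` O ->
  \forall g \near e, forall k, K k -> O (mul g k).
Proof.
move=> cK oO KO.
have := (iffLR (compact_near_coveringP K)) cK G (nbhs e) (fun g k => O (mul g k)) _.
apply => k Kk.
have HO : nbhs (mul e k) O by rewrite (mul1g HG); move: oO; rewrite openE; apply; exact: KO.
have [[U V] /= [HU HV] HUV] := @mul_cont _ _ _ _ HG (e, k) _ HO.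
by exists (V, U) => //= -[k' g] /= [Vk' Ug]; apply: (HUV (g, k')).
Qed.

End Tube.

Section Haar.
Variables (R : realType) (G : ptopologicalType) (mul : G -> G -> G) (inv : G -> G) (e : G).
Hypothesis HG : lc_group mul inv e.
Variable mu : {measure set (borelType G) -> \bar R}.
Hypothesis Hmu : haar_measure mul mu.

Lemma hausG : hausdorff_space G. Proof. by case: HG => _ _ _ _ []. Qed.
Lemma lcG : locally_compact [set: G]. Proof. by case: HG => _ _ _ _ []. Qed.

Lemma open_meas (O : set G) : open O -> measurable (O : set (borelType G)).
Proof. by move=> oO; apply: sub_sigma_algebra. Qed.

Lemma closed_meas (C : set G) : closed C -> measurable (C : set (borelType G)).
Proof.
move=> cC; rewrite -(setCK C); apply: measurableC; apply: open_meas.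
exact: closed_openC.
Qed.

Lemma compact_meas (C : set G) : compact C -> measurable (C : set (borelType G)).
Proof. by move=> cC; apply: closed_meas; apply: compact_closed => //; exact: hausG. Qed.

Lemma haar_inv (E : set (borelType G)) : measurable E -> forall x, mu [set mul x y | y in E] = mu E.
Proof. by case: Hmu => H _ _ _ mE x; exact: H. Qed.
Lemma haar_fin (K : set G) : compact K -> (mu K < +oo)%E.
Proof. by case: Hmu => _ H _ _; exact: H. Qed.
Lemma haar_inner (E : set (borelType G)) : measurable E ->
  mu E = ereal_sup [set mu K | K in [set K : set G | compact K /\ K `<=` E]].
Proof. by case: Hmu => _ _ _ H; exact: H. Qed.

Lemma fin_nbhs_open (K : set G) : compact K ->
  exists O : set G, [/\ open O, K `<=` O & (mu O < +oo)%E].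
Proof.
move=> cK.
move: lcG => /(_ e I) [V0 V0e [cV0 clV0]]; rewrite withinET in V0e.
pose W := interior V0.
pose Oz := \bigcup_(k in K) [set y | W (mul y (inv k))].
exists Oz; split.
- apply: bigcup_open => k Kk; apply: open_comp; last exact: open_interior.
  by move=> y _; exact: (mul_contr HG).
- move=> k Kk; exists k => //=; rewrite (mulgV HG).
  exact: nbhs_singleton (nbhs_interior V0e).
- pose Kc := (fun p : G * G => mul p.1 p.2) @` (V0 `*` K).
  have cKc : compact Kc.
    apply: continuous_compact; last exact: compact_setX.
    apply: continuous_subspaceT; exact: (mul_cont HG).
  apply: (le_lt_trans _ (haar_fin cKc)); apply: le_measure; rewrite ?inE.
  + apply: open_meas; apply: bigcup_open => k Kk; apply: open_comp; last exact: open_interior.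
    by move=> y _; exact: (mul_contr HG).
  + exact: compact_meas.
  + move=> y [k Kk /= Wy]; exists (mul y (inv k), k) => /=.
      by split => //; exact: interior_subset.
    by rewrite -(mulA HG) (mulVg HG) (mulg1 HG).
Qed.

Lemma outer (K : set G) : compact K -> (0 < mu K)%E ->
  exists O, [/\ open O, K `<=` O & (mu O < mu K + mu K)%E].
Proof.
move=> cK K0.
have mKK := compact_meas cK.
have clK : closed K by apply: compact_closed => //; exact: hausG.
have [Oz [oOz KOz Ozfin]] := fin_nbhs_open cK.
pose D := Oz `\` K.
have oD : open D by apply: openI => //; exact: closed_openC.
have mDD := open_meas oD.
have Dfin : (mu D < +oo)%E.
  apply: le_lt_trans Ozfin; apply: le_measure; rewrite ?inE //; first exact: open_meas.
  by move=> y [].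
have Kfin := haar_fin cK.
have fK : mu K \is a fin_num by rewrite ge0_fin_numE ?measure_ge0.
have fD : mu D \is a fin_num by rewrite ge0_fin_numE ?measure_ge0.
have : (mu D - mu K < mu D)%E.
  move: K0; rewrite -(fineK fK) -(fineK fD) -EFinB !lte_fin => K0; lra.
rewrite {2}(haar_inner mDD) => /ereal_sup_gt [_ [L [cL LD] <-] HL].
have clL : closed L by apply: compact_closed => //; exact: hausG.
have mLL := compact_meas cL.
have fL : mu L \is a fin_num.
  rewrite ge0_fin_numE ?measure_ge0 //; apply: le_lt_trans Dfin.
  by apply: le_measure; rewrite ?inE.
exists (Oz `\` L); split.
- by apply: openI => //; exact: closed_openC.
- move=> k Kk; split; first exact: KOz.
  by move=> /LD [].
- have mDmL : measurable (D `\` L : set (borelType G)) by exact: measurableD.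
  have H1 : (mu (Oz `\` L) <= mu K + mu (D `\` L))%E.
    apply: le_trans (measureU2 _ mKK mDmL); apply: le_measure; rewrite ?inE //.
    + by apply: open_meas; apply: openI => //; exact: closed_openC.
    + exact: measurableU.
    + move=> y [Ozy nLy]; have [Ky|nKy] := pselect (K y); first by left.
      by right.
  apply: (le_lt_trans H1).
  rewrite measureD // setIidr //.
  by rewrite (lteD2lE _ _ fK) (lteBlDr _ _ fL) addeC -(lteBlDr _ _ fK).
Qed.

Lemma steinhaus (K : set G) : compact K -> (0 < mu K)%E ->
  \forall g \near e, (0 < mu ([set mul g y | y in K] `&` K))%E.
Proof.
move=> cK K0.
have [Ob [oO KO muO]] := outer cK K0.
have mKK := compact_meas cK.
have Kfin := haar_fin cK.
apply: filterS (tube HG cK oO KO) => g HgO.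
have cgK : compact [set mul g y | y in K].
  apply: continuous_compact => //; apply: continuous_subspaceT; exact: (mul_contl HG).
have mgK := compact_meas cgK.
have mugK : mu [set mul g y | y in K] = mu K by exact: haar_inv.
rewrite measure_gt0; apply/eqP => H0.
have HU := measureUfinr mgK mKK Kfin.
rewrite H0 mugK sube0 in HU.
have : (mu ([set mul g y | y in K] `|` K) <= mu Ob)%E.
  apply: le_measure; rewrite ?inE //; first exact: measurableU.
    exact: open_meas.
  by move=> y [[k Kk <-]|Ky]; [exact: HgO|exact: KO].
by rewrite HU => /(lt_le_trans muO); rewrite ltxx.
Qed.

End Haar.


Section P2.
Variables (R : realType) (G : ptopologicalType) (mul : G -> G -> G)
  (inv : G -> G) (e : G) (A : normedModType R) (alpha : G -> A -> A).
Hypothesis HG : lc_group mul inv e.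
Hypothesis HA : isometric_action mul e alpha.

Lemma conj_sub (a : A) (x : G) (w : seq A) (N : set G) : nbhs e N ->
  (forall g, N g -> forall v, inspan w v -> inspan w (alpha g v)) ->
  inspan w (alpha x a) ->
  exists H, [/\ subgroup mul inv e H, open H & fin_dim_span (orbit_set alpha a H)].
Proof.
move=> HN Hinv Hxa.
have [H0 [[H0e H0M H0V] oH0 HH0]] := stab_subgroup HG HA HN Hinv.
pose f g := mul x (mul g (inv x)).
have fM g h : f (mul g h) = mul (f g) (f h).
  rewrite /f -!(mulA HG) (mulKg HG); congr (mul x _); exact: mulA HG.
have fV g : f (inv g) = inv (f g).
  by rewrite /f !(invM HG) (invK HG) (mulA HG).
have fe : f e = e by rewrite /f (mul1g HG) (mulgV HG).
exists (fun g => H0 (f g)); split.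
- split; first by rewrite fe.
  + by move=> g h Hg Hh; rewrite fM; exact: H0M.
  + by move=> g Hg; rewrite fV; exact: H0V.
- apply: open_comp => // g _.
  apply: (@continuous_comp _ _ _ (mul^~ (inv x)) (mul x)); first exact: (mul_contr HG).
  exact: (mul_contl HG).
- exists (map (alpha (inv x)) w) => v [g Hg <-].
  have -> : alpha g a = alpha (inv x) (alpha (f g) (alpha x a)).
    rewrite -!(alphaM HA); congr (alpha _ a).
    by rewrite /f -!(mulA HG) (mulVg HG) (mulg1 HG) (mulKg HG).
  have [c ->] := HH0 _ Hg _ Hxa.
  exists c; rewrite /lc (alpha_sum HA) size_map; apply: eq_bigr => i _.
  by rewrite (alphaZ HA) (nth_map 0).
Qed.

Lemma part2 (a : A) (mu : {measure set (borelType G) -> \bar R})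
  (C : set (borelType G)) :
  haar_measure mul mu -> measurable C -> (0 < mu C)%E ->
  fin_dim_span (orbit_set alpha a C) ->
  exists H, [/\ subgroup mul inv e H, open H & fin_dim_span (orbit_set alpha a H)].
Proof.
move=> Hmu mC C0 [s Hs].
have [K0 [cK0 K0C] K00] : exists2 K, compact K /\ K `<=` C & (0 < mu K)%E.
  move: C0; rewrite (haar_inner Hmu mC) => /ereal_sup_gt [_ [K HK <-] HK0].
  by exists K.
pose P k := `[< exists K t, [/\ compact K, (0 < mu K)%E, size t = k &
  forall v, orbit_set alpha a K v -> inspan t v] >].
have exP : exists k, P k.
  exists (size s); apply/asboolP; exists K0, s; split => // v [y Ky <-].
  by apply: Hs; exists y => //; exact: K0C.
case: (ex_minnP exP) => k /asboolP [K [t [cK Kpos tk Kt]]] mink.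
have key : forall K', compact K' -> K' `<=` K -> (0 < mu K')%E ->
    forall v, inspan t v -> exists t', (forall j, (j < size t')%N ->
      orbit_set alpha a K' (nth 0 t' j)) /\ inspan t' v.
  move=> K' cK' K'K K'0 v Hv.
  have sub : forall v, orbit_set alpha a K' v -> inspan t v.
    by move=> u [y Ky <-]; apply: Kt; exists y => //; exact: K'K.
  have [t' [t'S It' St']] := max_extract sub.
  have kt' : (k <= size t')%N by apply: mink; apply/asboolP; exists K', t'.
  exists t'; split => //; apply: inspan_trans Hv => i Hi.
  have [//|Nti] := pselect (inspan t' (nth 0 t i)).
  have Hsz := indep_size (s := t) _ (indep_cons It' Nti).
  suff : ((size t').+1 <= size t)%N by rewrite tk leqNgt ltnS kt'.
  apply: Hsz => -[|j] /= Hj; first exact: inspan_nth.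
  exact/sub/t'S.
have Hst := steinhaus HG Hmu cK Kpos.
have HN := nbhs_inv HG Hst.
have [x Kx] : K !=set0.
  apply/set0P/negP => /eqP K0e; move: Kpos; rewrite K0e measure0; by rewrite ltxx.
apply: (conj_sub (x := x) (w := t) HN).
  move=> g /= Hg v Hv; apply: (inspan_alpha HA _ Hv) => i Hi.
  pose K' := [set mul (inv g) y | y in K] `&` K.
  have cK' : compact K'.
    apply: compact_closedI; last by apply: compact_closed => //; exact: (hausG HG).
    apply: continuous_compact => //; apply: continuous_subspaceT; exact: (mul_contl HG).
  have [t' [t'K' [c ->]]] := key K' cK' (@subIsetr _ _ _) Hg _ (inspan_nth Hi).
  apply: (inspan_alpha HA _ (ex_intro _ c erefl)) => j Hj.
  have [y [[z Kz <-] _] <-] := t'K' j Hj.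
  rewrite -(alphaM HA) (mulKVg HG); apply: Kt; by exists z.
apply: Kt; by exists x.
Qed.

End P2.


Section P3.
Variables (R : realType) (G : ptopologicalType) (mul : G -> G -> G)
  (inv : G -> G) (e : G) (A : normedModType R) (alpha : G -> A -> A).
Hypothesis HG : lc_group mul inv e.
Hypothesis HA : isometric_action mul e alpha.

Lemma lc_lin (t : seq A) c d k : k *: lc t c + lc t d = lc t (fun i => k * c i + d i).
Proof.
by rewrite /lc scaler_sumr -big_split; apply: eq_bigr => i _; rewrite scalerA scalerDl.
Qed.

Lemma lc_norm (t : seq A) c : `|lc t c| <= \sum_(i < size t) `|c i| * `|nth 0 t i|.
Proof.
apply: le_trans (ler_norm_sum _ _ _) _; apply: ler_sum => i _; by rewrite normrZ.
Qed.

Lemma open_subgroup_closed (H : set G) : subgroup mul inv e H -> open H -> closed H.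
Proof.
move=> [He HM HV] oH; rewrite -openC openE => x nHx.
have : nbhs x [set y | H (mul (inv x) y)].
  apply: (mul_contl HG); rewrite (mulVg HG).
  by move: oH; rewrite openE; apply.
apply: filterS => y Hy Hy'; apply: nHx.
have := HM _ _ Hy' (HV _ Hy).
by rewrite (invM HG) (invK HG) (mulKVg HG).
Qed.

Lemma part3_compact (a : A) (H : set G) : a != 0 -> subgroup mul inv e H -> open H ->
  fin_dim_span (orbit_set alpha a H) ->
  (forall (b : A) (phi : A -> R), dual_elt phi ->
       vanishes_at_infty (fun x => phi (alpha x b))) ->
  compact H.
Proof.
move=> a0 sH oH [s Hs] C0.
have [t [tS It St]] := max_extract (S := orbit_set alpha a H) (fun v Hv => Hs v Hv).
have [d d0 Hd] := indep_bound It.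
pose n := size t.
have phis : forall j, exists phi : A -> R, (j < n)%N ->
    dual_elt phi /\ forall c, phi (lc t c) = c j.
  move=> j; have [Hj|Hj] := boolP (j < n)%N; last by exists (fun _ => 0) => /negP.
  pose B0 := [set p : A * R | exists c, p = (lc t c, c j)].
  have gB0 : good d^-1 B0 B0.
    split => //.
    - move=> x r y s0 k [c [-> ->]] [c' [-> ->]].
      by exists (fun i => k * c i + c' i); rewrite lc_lin.
    - move=> x r r' [c [-> ->]] [c' [E ->]].
      have H0 : lc t (fun i => -1 * c' i + c i) = 0 by rewrite -lc_lin E scaleN1r addNr.
      by have := It _ H0 j Hj => /= ?; lra.
    - move=> x r [c [-> ->]].
      apply: le_trans (ler_norm (c j)) _.
      apply: le_trans (_ : `|c j| <= d^-1 * (d * `|c j|)) _.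
        by rewrite mulrA mulVf ?gt_eqF // mul1r.
      by apply: ler_wpM2l; [rewrite invr_ge0 ltW|exact: Hd].
  have B0n : B0 !=set0 by exists (lc t (fun _ => 0), 0); exists (fun _ => 0).
  have HK : 0 <= d^-1 by rewrite invr_ge0 ltW.
  have [phi [Hl HB0 Hb]] := hahn_banach HK B0n gB0.
  exists phi => _; split; first by split => //; exact: bounded_linear_cont Hl Hb.
  by move=> c; apply: HB0; exists c.
have /choice [phi Hphi] := phis.
pose S := \sum_(i < n) `|nth 0 t i|.
have S0 : 0 <= S by apply: sumr_ge0 => i _; exact: normr_ge0.
pose eps := `|a| / (S + 1).
have eps0 : 0 < eps by rewrite divr_gt0 ?normr_gt0 // ltr_wpDl.
have /choice [Kf HK] : forall i, exists Ki, (i < n)%N ->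
    compact Ki /\ forall x, ~ Ki x -> `|phi i (alpha x a)| < eps.
  move=> i; have [Hi|Hi] := boolP (i < n)%N; last by exists set0 => /negP.
  have [Ki [cKi HKi]] := C0 a (phi i) (Hphi i Hi).1 eps eps0.
  by exists Ki.
pose Kc := \big[setU/set0]_(i < n) Kf i.
have cKc : compact Kc by apply: bigsetU_compact => i _; exact: (HK i (ltn_ord i)).1.
apply: (subclosed_compact _ cKc); first exact: open_subgroup_closed.
move=> h Hh; apply: contrapT => nK.
have hi : forall i, (i < n)%N -> `|phi i (alpha h a)| < eps.
  move=> i Hi; apply: (HK i Hi).2 => Ki; apply: nK.
  exact: (bigsetU_sup Hi) Ki.
have [c Hc] := St _ (imageP (fun x => alpha x a) Hh).
have Hci : forall i, (i < n)%N -> c i = phi i (alpha h a).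
  by move=> i Hi; rewrite Hc (Hphi i Hi).2.
have : `|a| <= eps * S.
  rewrite -(alpha_norm HA h) Hc; apply: le_trans (lc_norm _ _) _.
  rewrite /S mulr_sumr; apply: ler_sum => i _.
  by rewrite (Hci i (ltn_ord i)); apply: ler_wpM2r => //; exact: ltW (hi i (ltn_ord i)).
rewrite /eps mulrAC ler_pdivlMr ?ltr_wpDl // mulrDr mulr1 => H1.
have : 0 < `|a| by rewrite normr_gt0.
lra.
Qed.

End P3.

Theorem lemma1p2 (R : realType) (G : ptopologicalType) (mul : G -> G -> G)
  (inv : G -> G) (e : G) (A : completeNormedModType R) (alpha : G -> A -> A)
  (a : A) :
  lc_group mul inv e ->
  isometric_action mul e alpha ->
  a != 0 ->
  [/\
   (* (i) *)
   (forall U : set G, nbhs e U -> fin_dim_span (orbit_set alpha a U) ->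
      exists H : set G, [/\ subgroup mul inv e H, open H &
                            fin_dim_span (orbit_set alpha a H)]),
   (* (ii) *)
   (forall (mu : {measure set (borelType G) -> \bar R}) (C : set (borelType G)),
      haar_measure mul mu -> measurable C -> (0 < mu C)%E ->
      fin_dim_span (orbit_set alpha a C) ->
      exists H : set G, [/\ subgroup mul inv e H, open H &
                            fin_dim_span (orbit_set alpha a H)]) &
   (* (iii) *)
   ((forall (b : A) (phi : A -> R), dual_elt phi ->
       vanishes_at_infty (fun x => phi (alpha x b))) ->
    (forall U : set G, nbhs e U -> fin_dim_span (orbit_set alpha a U) ->
      exists H : set G, [/\ subgroup mul inv e H, open H, compact H &
                            fin_dim_span (orbit_set alpha a H)]) /\
    (forall (mu : {measure set (borelType G) -> \bar R}) (C : set (borelType G)),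
      haar_measure mul mu -> measurable C -> (0 < mu C)%E ->
      fin_dim_span (orbit_set alpha a C) ->
      exists H : set G, [/\ subgroup mul inv e H, open H, compact H &
                            fin_dim_span (orbit_set alpha a H)]))].
Proof.
move=> HG HA a0; split.
- by move=> U HU Hf; exact: (@part1 _ _ _ _ _ _ _ HG HA a U HU Hf).
- by move=> mu C Hmu mC C0 Hf; exact: (@part2 _ _ _ _ _ _ _ HG HA a mu C Hmu mC C0 Hf).
- move=> C0; split.
  + move=> U HU Hf; have [H [sH oH fH]] := @part1 _ _ _ _ _ _ _ HG HA a U HU Hf.
    by exists H; split => //; exact: (@part3_compact _ _ _ _ _ _ _ HG HA a H a0 sH oH fH C0).
  + move=> mu C Hmu mC Cpos Hf; have [H [sH oH fH]] := @part2 _ _ _ _ _ _ _ HG HA a mu C Hmu mC Cpos Hf.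
    by exists H; split => //; exact: (@part3_compact _ _ _ _ _ _ _ HG HA a H a0 sH oH fH C0).
Qed.
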